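(* Let $X=[0,1]$ with the usual metric, $U=\{0,1\}$, and let $F_0,F_1:[0,1]\to[0,1]$ be given by $F_0(x)=\frac18$ for $0\le x<\frac14$, $F_0(x)=2x-\frac38$ for $\frac14\le x<\frac38$, $F_0(x)=(x-\frac38)^2+\frac38$ for $\frac38\le x\le1$; and $F_1(x)=0$ for $0\le x<\frac1{16}$, $F_1(x)=2x-\frac18$ for $\frac1{16}\le x<\frac18$, $F_1(x)=\frac14(x-\frac18)^{1/3}+\frac18$ for $\frac18\le x<\frac14$, $F_1(x)=-x+\frac12$ for $\frac14\le x<\frac12$, $F_1(x)=0$ for $\frac12\le x\le1$. Consider the control system $x_{n+1}=F_{u_n}(x_n)$ and let $Q=[\frac14,\frac12]$. Then $Q$ is finitely mean equi-invariant but not mean equi-invariant (the point $\frac38$ is not a mean equi-invariant point of $Q$).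
   Context: For $\omega=(\omega_0,\omega_1,\dots)\in\mathscr U=U^{\mathbb N_0}$ and $x\in X$: $\phi(0,x,\omega)=x$, $\phi(k,x,\omega)=F_{\omega_{k-1}}\circ\cdots\circ F_{\omega_0}(x)$. $d(y,Q)=\inf_{q\in Q}|y-q|$, $B(x,\delta)$ open ball. A point $x\in Q$ is a finitely mean equi-invariant point of $Q$ if for every $\varepsilon>0$ there exist $\delta>0$ and a finite set $F\subset\mathscr U$ such that for every $y\in B(x,\delta)\cap Q$ there is $\omega\in F$ with $\limsup_{n\to\infty}\frac1n\sum_{i=0}^{n-1}d(\phi(i,y,\omega),Q)<\varepsilon$; it is a mean equi-invariant point if this holds with $F$ a singleton. $Q$ is (finitely) mean equi-invariant if all its points are (finitely) mean equi-invariant points. *)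

(* Defs.v *)
From Stdlib Require Import Reals Lra List.
From Coquelicot Require Import Coquelicot.
Open Scope R_scope.

Fixpoint phi {U : Type} (F : U -> R -> R) (k : nat) (x : R) (omega : nat -> U) : R :=
  match k with
  | O => x
  | S k' => F (omega k') (phi F k' x omega)
  end.

Definition dist_set (Q : R -> Prop) (y : R) : R :=
  real (Glb_Rbar (fun r => exists q, Q q /\ r = Rabs (y - q))).

(* (1/n) sum_{i=0}^{n-1} d(phi(i,y,omega),Q), for n >= 1 (value 0 at n = 0,
   irrelevant for the limsup). *)
Definition mean_dist {U : Type} (F : U -> R -> R) (Q : R -> Prop)
  (y : R) (omega : nat -> U) (n : nat) : R :=
  match n with
  | O => 0
  | S m => / INR (S m) * sum_f_R0 (fun i => dist_set Q (phi F i y omega)) m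
  end.

Definition mean_close {U : Type} (F : U -> R -> R) (Q : R -> Prop)
  (y : R) (omega : nat -> U) (eps : R) : Prop :=
  Rbar_lt (LimSup_seq (mean_dist F Q y omega)) (Finite eps).

Definition in_ball_Q (X Q : R -> Prop) (x delta y : R) : Prop :=
  X y /\ Rabs (y - x) < delta /\ Q y.

Definition finitely_mean_equi_invariant_point {U : Type} (X : R -> Prop)
  (F : U -> R -> R) (Q : R -> Prop) (x : R) : Prop :=
  Q x /\
  forall eps, eps > 0 ->
    exists delta, delta > 0 /\
    exists Fs : list (nat -> U),
      forall y, in_ball_Q X Q x delta y ->
        exists omega, In omega Fs /\ mean_close F Q y omega eps.

Definition mean_equi_invariant_point {U : Type} (X : R -> Prop)
  (F : U -> R -> R) (Q : R -> Prop) (x : R) : Prop :=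
  Q x /\
  forall eps, eps > 0 ->
    exists delta, delta > 0 /\
    exists omega : nat -> U,
      forall y, in_ball_Q X Q x delta y -> mean_close F Q y omega eps.

Definition finitely_mean_equi_invariant {U : Type} (X : R -> Prop)
  (F : U -> R -> R) (Q : R -> Prop) : Prop :=
  forall x, Q x -> finitely_mean_equi_invariant_point X F Q x.

Definition mean_equi_invariant {U : Type} (X : R -> Prop)
  (F : U -> R -> R) (Q : R -> Prop) : Prop :=
  forall x, Q x -> mean_equi_invariant_point X F Q x.

Definition X01 (x : R) : Prop := 0 <= x <= 1.

(* real cube root on [0, +oo) (Rpower 0 _ = 1 in Stdlib, so treat 0 apart) *)
Definition cbrt (x : R) : R := if Rle_dec x 0 then 0 else Rpower x (1/3).

Definition F0 (x : R) : R :=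
  if Rlt_dec x (1/4) then 1/8
  else if Rlt_dec x (3/8) then 2 * x - 3/8
  else (x - 3/8) ^ 2 + 3/8.

Definition F1 (x : R) : R :=
  if Rlt_dec x (1/16) then 0
  else if Rlt_dec x (1/8) then 2 * x - 1/8
  else if Rlt_dec x (1/4) then 1/4 * cbrt (x - 1/8) + 1/8
  else if Rlt_dec x (1/2) then - x + 1/2
  else 0.

(* U = {0,1} encoded as bool: false = 0, true = 1 *)
Definition Fex (u : bool) : R -> R := if u then F1 else F0.

Definition Qex (x : R) : Prop := 1/4 <= x <= 1/2.

(* Main.v *)
Require Import Defs.
From Stdlib Require Import Reals Lra Lia Classical.
From Coquelicot Require Import Coquelicot.
Open Scope R_scope.

Lemma dist_facts (Q : R -> Prop) y q0 m :
  Q q0 -> (forall q, Q q -> m <= Rabs (y - q)) ->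
  m <= dist_set Q y /\ dist_set Q y <= Rabs (y - q0).
Proof.
  intros Hq0 Hm. unfold dist_set.
  destruct (Glb_Rbar_correct (fun r => exists q, Q q /\ r = Rabs (y - q))) as [Hlb Hg].
  assert (H1 : Rbar_le (Glb_Rbar (fun r => exists q, Q q /\ r = Rabs (y - q))) (Rabs (y - q0))).
  { apply Hlb. exists q0; auto. }
  assert (H2 : Rbar_le m (Glb_Rbar (fun r => exists q, Q q /\ r = Rabs (y - q)))).
  { apply Hg. intros x [q [Hq ->]]. simpl. apply Hm; auto. }
  destruct (Glb_Rbar _) as [g| |]; simpl in *; try contradiction. lra.
Qed.

Lemma dist_le (Q : R -> Prop) y q : Q q -> dist_set Q y <= Rabs (y - q).
Proof. intros Hq. apply (dist_facts Q y q (-1)); auto. intros; pose proof (Rabs_pos (y-q0)); lra. Qed.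

Lemma dist_ge0 (Q : R -> Prop) y q : Q q -> 0 <= dist_set Q y.
Proof. intros Hq. apply (dist_facts Q y q 0); auto. intros; apply Rabs_pos. Qed.

Lemma dist_ge (Q : R -> Prop) y q m : Q q -> (forall q, Q q -> m <= Rabs (y - q)) -> m <= dist_set Q y.
Proof. intros Hq Hm. apply (dist_facts Q y q m); auto. Qed.

Lemma sum_geom_bound (d : nat -> R) C r :
  0 <= r < 1 -> (forall i, d i <= C * r ^ i) ->
  forall m, sum_f_R0 d m <= C / (1 - r) - C * r ^ (S m) / (1 - r).
Proof.
  intros Hr Hd. induction m as [|m IH]; simpl.
  - specialize (Hd 0%nat). simpl in Hd.
    replace (C / (1 - r) - C * (r * 1) / (1 - r)) with C by (field; lra). lra.
  - specialize (Hd (S m)). simpl in Hd.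
    replace (C / (1 - r) - C * (r * (r * r ^ m)) / (1 - r)) with
      ((C / (1 - r) - C * (r * r ^ m) / (1 - r)) + C * (r * r ^ m)) by (field; lra).
    simpl in IH. lra.
Qed.

Lemma mean_close_geom {U : Type} (F : U -> R -> R) Q y om C r eps :
  0 <= r < 1 -> 0 <= C -> eps > 0 ->
  (forall i, 0 <= dist_set Q (phi F i y om) <= C * r ^ i) ->
  mean_close F Q y om eps.
Proof.
  intros Hr HC He Hd. unfold mean_close.
  set (K := C / (1 - r)).
  assert (HK : 0 <= K) by (unfold K; apply Rmult_le_pos; [lra| left; apply Rinv_0_lt_compat; lra]).
  destruct (archimed_cor1 (eps / 2 / (K + 1))) as [N [HN HN0]].
  { apply Rdiv_lt_0_compat; lra. }
  apply Rbar_le_lt_trans with (LimSup_seq (fun _ => eps / 2)).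
  - apply LimSup_le. exists N. intros n Hn.
    destruct n as [|m]; [lia|]. unfold mean_dist.
    assert (Hs : sum_f_R0 (fun i => dist_set Q (phi F i y om)) m <= K).
    { eapply Rle_trans. apply sum_geom_bound with (C := C) (r := r); auto.
      intro i; apply Hd.
      unfold K. assert (0 <= C * r ^ S m / (1 - r)).
      { apply Rmult_le_pos. apply Rmult_le_pos; auto. apply pow_le; lra.
        left; apply Rinv_0_lt_compat; lra. } lra. }
    assert (Hs0 : 0 <= sum_f_R0 (fun i => dist_set Q (phi F i y om)) m).
    { apply cond_pos_sum. intro i; apply Hd. }
    assert (HNpos : 0 < INR N) by (apply lt_0_INR; lia).
    assert (HNle : INR N <= INR (S m)) by (apply le_INR; lia).
    assert (Hinv : / INR (S m) <= / INR N) by (apply Rinv_le_contravar; lra).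
    assert (0 < / INR (S m)) by (apply Rinv_0_lt_compat; lra).
    apply Rle_trans with (/ INR N * (K + 1)).
    + apply Rle_trans with (/ INR (S m) * (K+1)).
      * apply Rmult_le_compat_l; lra.
      * apply Rmult_le_compat_r; lra.
    + apply Rmult_lt_compat_r with (r := K + 1) in HN; [|lra].
      replace (eps / 2 / (K + 1) * (K + 1)) with (eps/2) in HN by (field; lra). lra.
  - rewrite LimSup_seq_const. simpl. lra.
Qed.

Lemma not_mean_close {U : Type} (F : U -> R -> R) Q y om n :
  (forall i, 0 <= dist_set Q (phi F i y om)) ->
  (forall i, (n <= i)%nat -> 1/8 <= dist_set Q (phi F i y om)) ->
  ~ mean_close F Q y om (1/8).
Proof.
  intros H0 H1. unfold mean_close.
  set (d := fun i => dist_set Q (phi F i y om)).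
  assert (Hsum : forall m, (INR m + 1 - INR n) / 8 <= sum_f_R0 d m).
  { induction m as [|m IH].
    - simpl. destruct n as [|n].
      + simpl. specialize (H1 0%nat (le_n _)). unfold d. lra.
      + rewrite S_INR. pose proof (pos_INR n). specialize (H0 0%nat). unfold d. lra.
    - change (sum_f_R0 d (S m)) with (sum_f_R0 d m + d (S m)). rewrite S_INR.
      destruct (Compare_dec.le_lt_dec n (S m)) as [Hle|Hlt].
      + specialize (H1 (S m) Hle). unfold d in *. lra.
      + assert (Hl2 : (S (S m) <= n)%nat) by lia. apply le_INR in Hl2. rewrite !S_INR in Hl2.
        assert (0 <= sum_f_R0 d m) by (apply cond_pos_sum; intro; apply H0).
        specialize (H0 (S m)). unfold d in *. lra. }
  assert (Hev : forall e, 0 < e -> Rbar_le (1/8 - e) (LimSup_seq (mean_dist F Q y om))).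
  { intros e He.
    destruct (archimed_cor1 (8 * e / (INR n + 1))) as [N [HN HN0]].
    { pose proof (pos_INR n). apply Rdiv_lt_0_compat; lra. }
    rewrite <- (LimSup_seq_const (1/8 - e)).
    apply LimSup_le. exists N. intros k Hk.
    destruct k as [|m]; [lia|]. unfold mean_dist.
    specialize (Hsum m). fold d.
    assert (HNpos : 0 < INR N) by (apply lt_0_INR; lia).
    assert (HNle : INR N <= INR (S m)) by (apply le_INR; lia).
    rewrite S_INR in *.
    pose proof (pos_INR n).
    assert (Hinv : / (INR m + 1) <= / INR N) by (apply Rinv_le_contravar; lra).
    assert (Hq : (INR n + 1) / (INR m + 1) <= 8 * e).
    { apply Rle_trans with ((INR n + 1) * / INR N).
      unfold Rdiv; apply Rmult_le_compat_l; lra.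
      apply Rmult_lt_compat_l with (r := INR n + 1) in HN; [|lra].
      replace ((INR n + 1) * (8 * e / (INR n + 1))) with (8 * e) in HN by (field; lra). lra. }
    apply Rle_trans with (/ (INR m + 1) * ((INR m + 1 - INR n) / 8)).
    + replace (/ (INR m + 1) * ((INR m + 1 - INR n) / 8)) with (1/8 - ((INR n + 1) / (INR m + 1))/8 + /(INR m + 1) / 8) by (field; lra).
      assert (0 < / (INR m + 1)) by (apply Rinv_0_lt_compat; lra). lra.
    + apply Rmult_le_compat_l; [left; apply Rinv_0_lt_compat; lra| exact Hsum]. }
  intro Hlt.
  destruct (LimSup_seq (mean_dist F Q y om)) as [l| |] eqn:E; simpl in Hlt; try contradiction.
  - specialize (Hev ((1/8 - l)/2) ltac:(lra)). simpl in Hev. lra.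
  - specialize (Hev 1 ltac:(lra)). simpl in Hev. exact Hev.
Qed.
Lemma cbrt_pos t : 0 < t -> 0 < cbrt t /\ cbrt t ^ 3 = t.
Proof.
  intros Ht. unfold cbrt. destruct (Rle_dec t 0); [lra|]. split.
  - unfold Rpower. apply exp_pos.
  - rewrite <- Rpower_pow by (unfold Rpower; apply exp_pos).
    rewrite Rpower_mult. replace (1 / 3 * INR 3) with 1 by (simpl; field).
    apply Rpower_1; auto.
Qed.

Lemma cbrt_0 : cbrt 0 = 0.
Proof. unfold cbrt. destruct (Rle_dec 0 0); lra. Qed.

Ltac brF := unfold F0, F1; repeat destruct Rlt_dec; try lra.

Lemma F0_right x : 3/8 <= x <= 1/2 -> 3/8 <= F0 x <= 1/2.
Proof. intros. brF; nra. Qed.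

Lemma F1_start y : 1/4 <= y < 3/8 -> F1 y = 1/2 - y.
Proof. intros. brF. Qed.

Lemma F1_conv x1 x : 1/8 < x1 <= 1/4 -> x1 <= x <= 1/4 ->
  x <= F1 x <= 1/4 /\ 1/4 - F1 x <= (1/4 - x) * / (8 * x1).
Proof.
  intros H1 H2.
  assert (Hr : 0 < 8 * x1) by lra.
  destruct (Req_dec x (1/4)) as [->|Hne].
  - replace (F1 (1/4)) with (1/4) by brF.
    split; [lra|]. replace (1/4 - 1/4) with 0 by lra. rewrite Rmult_0_l. lra.
  - assert (Hx : x < 1/4) by lra.
    replace (F1 x) with (1/4 * cbrt (x - 1/8) + 1/8) by brF.
    destruct (cbrt_pos (x - 1/8)) as [Hc Hc3]; [lra|].
    set (c := cbrt (x - 1/8)) in *.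
    set (b := 2 * c).
    assert (Hb3 : b ^ 3 = 8 * x - 1) by (unfold b; replace (8 * x - 1) with (8 * c ^ 3) by (rewrite Hc3; lra); ring).
    assert (Hb0 : 0 < b) by (unfold b; lra).
    assert (Hb1 : b < 1).
    { destruct (Rlt_le_dec b 1); auto.
      assert (1 <= b ^ 3) by (simpl; nra). lra. }
    assert (Hba : 8 * x - 1 <= b) by (rewrite <- Hb3; simpl; nra).
    replace (1/4 * c + 1/8) with (b / 8 + 1/8) by (unfold b; field).
    split; [lra|].
    apply Rmult_le_reg_r with (8 * x1); [lra|].
    rewrite Rmult_assoc, Rinv_l by lra. rewrite Rmult_1_r.
    assert (Hk : 1 - (8 * x - 1) = (1 - b) * (1 + b + b * b)) by (rewrite <- Hb3; simpl; ring).
    assert (0 <= (1 - b) * (b + b * b - (8 * x1 - 1))) by (apply Rmult_le_pos; nra).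
    nra.
Qed.

Lemma low_inv b x : 0 <= x <= 1/8 -> 0 <= Fex b x <= 1/8.
Proof.
  intros H. destruct b; simpl.
  - unfold F1. repeat destruct Rlt_dec; try lra.
    replace (x - 1/8) with 0 by lra. rewrite cbrt_0. lra.
  - brF.
Qed.

Definition Sset x := 0 <= x <= 1/8 \/ 3/8 <= x <= 1/2.

Lemma S_F1 x : Sset x -> 0 <= F1 x <= 1/8.
Proof.
  intros [H|H].
  - apply (low_inv true x H).
  - brF.
Qed.

Lemma S_inv b x : Sset x -> Sset (Fex b x).
Proof.
  intros Hs. destruct b; simpl.
  - left; apply S_F1; auto.
  - destruct Hs as [H|H].
    + left. apply (low_inv false x H).
    + right. apply F0_right; auto.
Qed.

Lemma far_dist x : 0 <= x <= 1/8 -> 1/8 <= dist_set Qex x.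
Proof.
  intros H. apply dist_ge with (q := 1/4). unfold Qex; lra.
  intros q Hq. unfold Qex in Hq. unfold Rabs; destruct Rcase_abs; lra.
Qed.

Lemma in_dist x : Qex x -> dist_set Qex x = 0.
Proof.
  intros H. pose proof (dist_le Qex x x H). pose proof (dist_ge0 Qex x x H).
  rewrite Rminus_diag, Rabs_R0 in *. lra.
Qed.

Lemma part3 : ~ mean_equi_invariant_point X01 Fex Qex (3/8).
Proof.
  intros [HQ H]. destruct (H (1/8)) as [d [Hd [om Hom]]]; [lra|].
  assert (Hd0 : forall y i, 0 <= dist_set Qex (phi Fex i y om)).
  { intros. apply dist_ge0 with (q := 1/4). unfold Qex; lra. }
  destruct (classic (exists n, om n = true)) as [[n Hn]|Hno].
  - apply (not_mean_close Fex Qex (3/8) om (S n)); auto.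
    + assert (HS : forall k, Sset (phi Fex k (3/8) om)).
      { induction k; simpl. right; lra. apply S_inv; auto. }
      assert (Hl : forall j, 0 <= phi Fex (S n + j) (3/8) om <= 1/8).
      { induction j.
        - rewrite Nat.add_0_r. simpl. rewrite Hn. simpl. apply S_F1; auto.
        - replace (S n + S j)%nat with (S (S n + j)) by lia. simpl phi at 1.
          apply low_inv; auto. }
      intros i Hi. replace i with (S n + (i - S n))%nat by lia. apply far_dist, Hl.
    + apply Hom. unfold in_ball_Q, X01, Qex. split; [lra|]. split; [|lra].
      rewrite Rminus_diag, Rabs_R0; lra.
  - assert (Hf : forall n, om n = false).
    { intro n. destruct (om n) eqn:E; auto. exfalso; apply Hno; eauto. }
    set (s0 := Rmin d (1/8) / 2).
    assert (Hs0 : 0 < s0 <= 1/16 /\ s0 < d).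
    { unfold s0. pose proof (Rmin_l d (1/8)). pose proof (Rmin_r d (1/8)).
      assert (0 < Rmin d (1/8)) by (apply Rmin_glb_lt; lra). lra. }
    set (y := 3/8 - s0).
    assert (Hinv : forall k, phi Fex k y om = 1/8 \/
              (1/8 <= phi Fex k y om < 3/8 /\ s0 <= (1/2)^k * (3/8 - phi Fex k y om))).
    { induction k.
      - right. simpl. unfold y. lra.
      - simpl phi. rewrite Hf. simpl Fex.
        destruct IHk as [E|[H1 H2]].
        + left. rewrite E. brF.
        + set (x := phi Fex k y om) in *.
          destruct (Rlt_le_dec x (1/4)).
          * left. brF.
          * right. replace (F0 x) with (2 * x - 3/8) by brF.
            split; [lra|]. simpl. lra. }
    destruct (pow_lt_1_zero (1/2) ltac:(rewrite Rabs_pos_eq; lra) (4 * s0) ltac:(lra)) as [N HN].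
    specialize (HN N (le_n _)). rewrite Rabs_pos_eq in HN by (apply pow_le; lra).
    assert (HN8 : phi Fex N y om = 1/8).
    { destruct (Hinv N) as [E|[H1 H2]]; auto. exfalso.
      assert ((1/2)^N * (3/8 - phi Fex N y om) <= (1/2)^N * (1/4))
        by (apply Rmult_le_compat_l; [apply pow_le|]; lra). lra. }
    assert (Hall : forall j, phi Fex (N + j) y om = 1/8).
    { induction j. rewrite Nat.add_0_r; auto.
      replace (N + S j)%nat with (S (N + j)) by lia. simpl phi at 1.
      rewrite IHj, Hf. simpl. brF. }
    apply (not_mean_close Fex Qex y om N); auto.
    + intros i Hi. replace i with (N + (i - N))%nat by lia. rewrite Hall. apply far_dist; lra.
    + apply Hom. unfold in_ball_Q, X01, Qex, y. split; [lra|]. split; [|lra].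
      replace (3/8 - s0 - 3/8) with (- s0) by lra. rewrite Rabs_Ropp, Rabs_pos_eq; lra.
Qed.

Lemma part1 : finitely_mean_equi_invariant X01 Fex Qex.
Proof.
  intros x Hx. split; auto. intros eps He. exists 1. split; [lra|].
  exists (cons (fun _ => false) (cons (fun _ => true) nil)).
  intros y [HX [_ Hy]]. unfold Qex in Hy.
  destruct (Rle_lt_dec (3/8) y) as [Hr|Hl].
  - exists (fun _ => false). split; [simpl; auto|].
    apply mean_close_geom with (C := 0) (r := 1/2); try lra.
    assert (Hi : forall i, 3/8 <= phi Fex i y (fun _ => false) <= 1/2).
    { induction i; simpl. lra. apply F0_right; auto. }
    intro i. rewrite in_dist by (unfold Qex; specialize (Hi i); lra). lra.
  - exists (fun _ => true). split; [simpl; auto|].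
    set (x1 := 1/2 - y). set (r := / (8 * x1)).
    assert (Hx1 : 1/8 < x1 <= 1/4) by (unfold x1; lra).
    assert (Hrr : 1/2 <= r < 1).
    { unfold r. split.
      - apply Rmult_le_reg_r with (8 * x1); [lra|]. rewrite Rinv_l by lra. lra.
      - apply Rmult_lt_reg_r with (8 * x1); [lra|]. rewrite Rinv_l by lra. lra. }
    assert (Hi : forall k, x1 <= phi Fex (S k) y (fun _ => true) <= 1/4 /\
                   1/4 - phi Fex (S k) y (fun _ => true) <= 1/8 * r ^ k).
    { induction k.
      - simpl. rewrite F1_start by lra. fold x1. lra.
      - destruct IHk as [H1 H2].
        change (phi Fex (S (S k)) y (fun _ => true)) with (F1 (phi Fex (S k) y (fun _ => true))).
        destruct (F1_conv x1 (phi Fex (S k) y (fun _ => true)) Hx1 H1) as [H3 H4].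
        split; [lra|]. fold r in H4. change (r ^ S k) with (r * r ^ k).
        eapply Rle_trans; [exact H4|].
        apply Rle_trans with (1/8 * r ^ k * r); [apply Rmult_le_compat_r; lra| lra]. }
    apply mean_close_geom with (C := 1) (r := r); try lra.
    intros [|k].
    + simpl. rewrite in_dist by (unfold Qex; lra). lra.
    + split. apply dist_ge0 with (q := 1/4); unfold Qex; lra.
      destruct (Hi k) as [H1 H2].
      eapply Rle_trans. apply dist_le with (q := 1/4). unfold Qex; lra.
      rewrite Rabs_left1 by lra. change (r ^ S k) with (r * r ^ k).
      assert (0 <= r ^ k) by (apply pow_le; lra). nra.
Qed.

Theorem mainTheorem17 :
  finitely_mean_equi_invariant X01 Fex Qex /\
  ~ mean_equi_invariant X01 Fex Qex /\
  ~ mean_equi_invariant_point X01 Fex Qex (3/8).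
Proof.
  split; [apply part1|]. split; [|apply part3].
  intro H. apply part3. apply H. unfold Qex; lra.
Qed.
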